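(* Let $a_1,\dots,a_d$ be positive integers with $\gcd(a_1,\dots,a_d)=1$, and let $N$ be a positive integer which is a $\mathbb Z_{\ge0}$-linear combination of $a_1,\dots,a_d$. Let $\mathcal M$ be a maximal element of $\mathfrak M$. Then for every $0\le i<N$ there is exactly one $m\in\mathcal M$ with $m\equiv i\pmod N$. In particular every maximal element of $\mathfrak M$ has exactly $N$ elements.
   Context: $\mathcal S_+=\{N+\sum_ic_ia_i: c_i\in\mathbb Z_{\ge0}\}$, $\mathcal S_-=-\mathcal S_+$, $\mathcal S=\mathcal S_+\cup\mathcal S_-$, and $\mathfrak M=\{\mathcal M\subset\mathbb Z:\ m,m'\in\mathcal M\Rightarrow m-m'\notin\mathcal S\}$, partially ordered by inclusion. *)

(* Defs.v *)
From HB Require Import structures.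
From mathcomp Require Import all_boot all_order all_algebra.
Set Implicit Arguments. Unset Strict Implicit. Unset Printing Implicit Defensive.
Import Order.TTheory GRing.Theory Num.Theory.
Local Open Scope ring_scope.

Definition Splus (d : nat) (a : 'I_d -> nat) (N : nat) (x : int) : Prop :=
  exists c : 'I_d -> nat, x = ((N + \sum_(i < d) c i * a i)%N)%:Z.

Definition Sset (d : nat) (a : 'I_d -> nat) (N : nat) (x : int) : Prop :=
  Splus a N x \/ Splus a N (- x).

Definition admissible (d : nat) (a : 'I_d -> nat) (N : nat) (M : int -> Prop) : Prop :=
  forall m m', M m -> M m' -> ~ Sset a N (m - m').

Definition maximal_adm (d : nat) (a : 'I_d -> nat) (N : nat) (M : int -> Prop) : Prop :=
  admissible a N M /\
  forall M' : int -> Prop, admissible a N M' -> (forall x, M x -> M' x) ->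
    forall x, M' x -> M x.

(* Main.v *)
Require Import Defs.
From HB Require Import structures.
From mathcomp Require Import all_boot all_order all_algebra.
From mathcomp Require Import zify ring.
From Stdlib Require Import Classical.
Set Implicit Arguments. Unset Strict Implicit.
Import Order.TTheory GRing.Theory Num.Theory.
Local Open Scope ring_scope.

Definition Tset (d : nat) (a : 'I_d -> nat) (y : int) : Prop :=
  exists c : 'I_d -> nat, y = (\sum_(i < d) c i * a i)%N%:Z.

Lemma T0 d (a : 'I_d -> nat) : Tset a 0.
Proof. exists (fun _ => 0%N); by rewrite big1. Qed.

Lemma TD d (a : 'I_d -> nat) x y : Tset a x -> Tset a y -> Tset a (x + y).
Proof.
move=> [c ->] [c' ->]; exists (fun i => c i + c' i)%N.
rewrite -PoszD; congr Posz; rewrite -big_split /=.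
by apply: eq_bigr => i _; rewrite mulnDl.
Qed.

Lemma Splus_T d (a : 'I_d -> nat) N x :
  Splus a N x <-> exists t, Tset a t /\ x = N%:Z + t.
Proof.
split.
- move=> [c ->]; exists (\sum_(i < d) c i * a i)%N%:Z; split; first by exists c.
  by rewrite PoszD.
- move=> [t [[c ->] ->]]; exists c; by rewrite PoszD.
Qed.

Lemma Splus_ge d (a : 'I_d -> nat) N x : Splus a N x -> N%:Z <= x.
Proof. move=> [c ->]; rewrite lez_nat; exact: leq_addr. Qed.

Lemma TNk d (a : 'I_d -> nat) N : Tset a N%:Z -> forall k : nat, Tset a (N%:Z * k%:Z).
Proof.
move=> TN; elim => [|k IH]; first by rewrite mulr0; exact: T0.
have -> : N%:Z * k.+1%:Z = N%:Z * k%:Z + N%:Z by rewrite intS mulrDr mulr1 addrC.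
exact: TD.
Qed.

Lemma Sq d (a : 'I_d -> nat) N : Tset a N%:Z -> forall q : int, q != 0 -> Sset a N (q * N%:Z).
Proof.
move=> TN [k|k] hq.
- left; case: k hq => [//|k] _; apply/Splus_T; exists (N%:Z * k%:Z); split; first exact: TNk.
  by rewrite intS mulrDl mul1r mulrC.
- right; apply/Splus_T; exists (N%:Z * k%:Z); split; first exact: TNk.
  by rewrite NegzE mulNr opprK intS mulrDl mul1r mulrC.
Qed.

Lemma first_bad (Q : nat -> Prop) : ~ Q 0%N -> forall k, Q k -> exists j, ~ Q j /\ Q j.+1.
Proof.
move=> h0; elim => [|k IH] Hk; first by [].
case: (classic (Q k)) => [Qk|nQk]; [exact: IH | by exists k].
Qed.

Theorem mainTheorem16 (d : nat) (a : 'I_d -> nat) (N : nat) (M : int -> Prop)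
  (ha_pos : forall i, (0 < a i)%N)
  (ha_gcd : \big[gcdn/0%N]_(i < d) a i = 1%N)
  (hN_pos : (0 < N)%N)
  (hN_comb : exists c : 'I_d -> nat, N = (\sum_(i < d) c i * a i)%N)
  (hM : maximal_adm a N M) :
  (forall i : int, 0 <= i < N%:Z ->
     exists! m : int, M m /\ (m = i %[mod N%:Z])%Z) /\
  (exists s : seq int, uniq s /\ size s = N /\ forall m, M m <-> m \in s).
Proof.
move: hM => [hadm hmax].
have TN : Tset a N%:Z by case: hN_comb => c ->; exists c.
have NZ : N%:Z != 0 by rewrite eqz_nat -lt0n.
have S0 : ~ Sset a N 0.
  move=> [h|h]; [have := Splus_ge h | have := Splus_ge h]; rewrite ?oppr0; lia.
have Uq : forall m m', M m -> M m' -> (m %% N%:Z)%Z = (m' %% N%:Z)%Z -> m = m'.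
  move=> m m' Hm Hm' e.
  have e2 : m - m' = ((m %/ N%:Z)%Z - (m' %/ N%:Z)%Z) * N%:Z.
    by rewrite {1}(divz_eq m N%:Z) {1}(divz_eq m' N%:Z) e; ring.
  case: (eqVneq ((m %/ N%:Z)%Z - (m' %/ N%:Z)%Z) 0) => [h|h].
    by apply/eqP; rewrite -subr_eq0 e2 h mul0r.
  by exfalso; apply: (hadm m m' Hm Hm'); rewrite e2; exact: Sq.
have bnd : forall n : nat, exists K : nat, forall m, M m -> (m %% N%:Z)%Z < n%:Z ->
    -(K%:Z) <= m <= K%:Z.
  elim => [|n [K hK]].
    exists 0%N => m _; have := modz_ge0 m NZ; lia.
  case: (classic (exists m0, M m0 /\ (m0 %% N%:Z)%Z = n%:Z)) => [[m0 [H0 E0]] | nex].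
    exists (K + absz m0)%N => m Hm lt.
    have [lt'|eq'] : (m %% N%:Z)%Z < n%:Z \/ (m %% N%:Z)%Z = n%:Z by lia.
      have := hK m Hm lt'; lia.
    have -> := Uq m m0 Hm H0 (etrans eq' (esym E0)); lia.
  exists K => m Hm lt.
  have [lt'|eq'] : (m %% N%:Z)%Z < n%:Z \/ (m %% N%:Z)%Z = n%:Z by lia.
    exact: hK.
  by exfalso; apply: nex; exists m.
have part1 : forall i : int, 0 <= i < N%:Z ->
     exists! m : int, M m /\ (m = i %[mod N%:Z])%Z.
  move=> i hi.
  case: (classic (exists m, M m /\ (m %% N%:Z)%Z = (i %% N%:Z)%Z)) => [[m [Hm E]]|nex].
    exists m; split; first by split.
    by move=> m' [Hm' E']; apply: Uq => //; rewrite E E'.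
  exfalso.
  have [K hK] := bnd N.
  have hK' : forall m, M m -> -(K%:Z) <= m <= K%:Z.
    by move=> m Hm; apply: hK => //; apply: ltz_pmod; lia.
  set x := fun k : nat => i + (K%:Z - k%:Z) * N%:Z.
  have xmod : forall k, (x k %% N%:Z)%Z = (i %% N%:Z)%Z.
    by move=> k; rewrite /x addrC modzMDl.
  suff [y [ymod yok]] : exists y, (y %% N%:Z)%Z = (i %% N%:Z)%Z /\
      forall m, M m -> ~ Splus a N (y - m) /\ ~ Splus a N (m - y).
    have adm' : admissible a N (fun z => M z \/ z = y).
      move=> m m' [Hm|->] [Hm'|->].
      - exact: hadm.
      - have [h1 h2] := yok m Hm; by move=> [|]; rewrite ?opprB.
      - have [h1 h2] := yok m' Hm'; by move=> [|]; rewrite ?opprB.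
      - by rewrite subrr.
    have My := hmax _ adm' (fun z h => or_introl h) y (or_intror erefl).
    by apply: nex; exists y.
  pose Q k := exists m, M m /\ Splus a N (m - x k).
  have nQ0 : ~ Q 0%N.
    move=> [m [Hm /Splus_ge]]; have := hK' m Hm; rewrite /x; nia.
  case: (classic (exists k, Q k)) => [[k Qk]|noQ].
    have [j [nQj [mj [Hmj Sj]]]] := first_bad nQ0 Qk.
    exists (x j); split; first exact: xmod.
    move=> m Hm; split; last by move=> h; apply: nQj; exists m.
    move=> /Splus_T [t' [Tt' et']].
    have [t [Tt et]] := (Splus_T a N (mj - x j.+1)).1 Sj.
    apply: (hadm mj m Hmj Hm); left; apply/Splus_T; exists (t + t'); split; first exact: TD.
    have : x j.+1 = x j - N%:Z by rewrite /x intS; ring.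
    lia.
  exists (x (K + K + absz i)%N); split; first exact: xmod.
  move=> m Hm; split; last by move=> h; apply: noQ; exists (K + K + absz i)%N, m.
  move=> /Splus_ge; have := hK' m Hm; rewrite /x; nia.
split; first exact: part1.
have seqn : forall n, (n <= N)%N -> exists s : seq int, uniq s /\ size s = n /\
    forall m, (M m /\ (m %% N%:Z)%Z < n%:Z) <-> m \in s.
  elim => [|n IH] hn.
    exists [::]; split => //; split => // m; split => // -[_]; have := modz_ge0 m NZ; lia.
  have [s [us [ss hs]]] := IH (ltnW hn).
  have [mn [[Hmn En] _]] := part1 n%:Z ltac:(lia).
  have En' : (mn %% N%:Z)%Z = n%:Z by rewrite En modz_small //; lia.
  exists (mn :: s); split.
    rewrite /= us andbT; apply/negP => /hs [_]; lia.
  split; first by rewrite /= ss.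
  move=> m; rewrite in_cons; split.
    move=> [Hm lt].
    have [lt'|eq'] : (m %% N%:Z)%Z < n%:Z \/ (m %% N%:Z)%Z = n%:Z by lia.
      by apply/orP; right; apply/hs.
    by apply/orP; left; apply/eqP; apply: Uq => //; rewrite eq' En'.
  move=> /orP [/eqP ->|/hs [Hm lt]]; split => //; lia.
have [s [us [ss hs]]] := seqn N (leqnn N).
exists s; split => //; split => // m; rewrite -hs; split => [Hm|[]//]; split => //.
by apply: ltz_pmod; lia.
Qed.
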